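(* Let $\mathbf A$ be a complete residuated lattice, $I$ a set, and $O\colon A^I\to A^I$ an interior operator satisfying $d^I\cdot O(x)\le O(d^I\cdot x)$ for all $d\in A$ and $x\in A^I$. Then there exist a set $J$ and a fuzzy relation $R\colon I\times J\to A$ such that $O(x)=\rho_R(\phi_R(x))$ for all $x\in A^I$. (One may take $J=\{O(a)\mid a\in A^I\}$ and $R(i,O(a))=O(a)(i)$.)
   Context: A residuated lattice is an algebra $\mathbf A=(A;\vee,\wedge,\cdot,\rightarrow,0,1)$ such that $(A;\vee,\wedge,0,1)$ is a bounded lattice, $(A;\cdot,1)$ is a commutative monoid, and $x\cdot y\le z$ iff $x\le y\rightarrow z$; complete if the lattice reduct is complete. $A^K$ carries componentwise operations and order; $d^K$ is the constant element with value $d\in A$. An interior operator is a monotone $O$ with $O(x)\le x$ and $O(O(x))=O(x)$. For $R\colon I\times J\to A$: $\phi_R\colon A^I\to A^J$, $\phi_R(x)(j)=\bigwedge_{i\in I}(R(i,j)\rightarrow x(i))$; $\rho_R\colon A^J\to A^I$, $\rho_R(y)(i)=\bigvee_{j\in J}(R(i,j)\cdot y(j))$. *)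

(* Defs.v *)
Record CompleteResLattice := {
  carrier :> Type;
  le : carrier -> carrier -> Prop;
  join : carrier -> carrier -> carrier;
  meet : carrier -> carrier -> carrier;
  mul : carrier -> carrier -> carrier;
  res : carrier -> carrier -> carrier;
  zero : carrier;
  one : carrier;
  sup : (carrier -> Prop) -> carrier;
  inf : (carrier -> Prop) -> carrier;
  le_refl : forall x, le x x;
  le_trans : forall x y z, le x y -> le y z -> le x z;
  le_antisym : forall x y, le x y -> le y x -> x = y;
  join_ub_l : forall x y, le x (join x y);
  join_ub_r : forall x y, le y (join x y);
  join_least : forall x y z, le x z -> le y z -> le (join x y) z;
  meet_lb_l : forall x y, le (meet x y) x;
  meet_lb_r : forall x y, le (meet x y) y;
  meet_greatest : forall x y z, le z x -> le z y -> le z (meet x y);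
  zero_least : forall x, le zero x;
  one_greatest : forall x, le x one;
  mul_assoc : forall x y z, mul x (mul y z) = mul (mul x y) z;
  mul_comm : forall x y, mul x y = mul y x;
  mul_one : forall x, mul x one = x;
  residuation : forall x y z, le (mul x y) z <-> le x (res y z);
  sup_ub : forall (S : carrier -> Prop) x, S x -> le x (sup S);
  sup_least : forall (S : carrier -> Prop) z,
      (forall x, S x -> le x z) -> le (sup S) z;
  inf_lb : forall (S : carrier -> Prop) x, S x -> le (inf S) x;
  inf_greatest : forall (S : carrier -> Prop) z,
      (forall x, S x -> le z x) -> le z (inf S)
}.

Arguments le {c} _ _.
Arguments mul {c} _ _.
Arguments res {c} _ _.
Arguments sup {c} _.
Arguments inf {c} _.

Definition bigsup {A : CompleteResLattice} {T : Type} (f : T -> A) : A :=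
  sup (fun a => exists t, a = f t).
Definition biginf {A : CompleteResLattice} {T : Type} (f : T -> A) : A :=
  inf (fun a => exists t, a = f t).

Definition le_fun {A : CompleteResLattice} {I : Type} (x y : I -> A) : Prop :=
  forall i, le (x i) (y i).
Definition const {A : CompleteResLattice} (I : Type) (d : A) : I -> A :=
  fun _ => d.
Definition mul_fun {A : CompleteResLattice} {I : Type} (x y : I -> A) : I -> A :=
  fun i => mul (x i) (y i).

Definition interior_operator {A : CompleteResLattice} {I : Type}
  (O : (I -> A) -> (I -> A)) : Prop :=
  (forall x y, le_fun x y -> le_fun (O x) (O y)) /\
  (forall x, le_fun (O x) x) /\
  (forall x, O (O x) = O x).

Definition phi {A : CompleteResLattice} {I J : Type} (R : I -> J -> A)
  (x : I -> A) : J -> A :=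
  fun j => biginf (fun i => res (R i j) (x i)).
Definition rho {A : CompleteResLattice} {I J : Type} (R : I -> J -> A)
  (y : J -> A) : I -> A :=
  fun i => bigsup (fun j => mul (R i j) (y j)).

(* Main.v *)
Require Import Defs.
From Stdlib Require Import FunctionalExtensionality.

Lemma mul_mono_l (A : CompleteResLattice) (a b c : A) :
  le b c -> le (mul b a) (mul c a).
Proof.
  intro H. apply residuation. apply le_trans with c; auto.
  apply residuation. apply le_refl.
Qed.

Lemma mul_mono_r (A : CompleteResLattice) (a b c : A) :
  le b c -> le (mul a b) (mul a c).
Proof.
  intro H. rewrite (mul_comm A a b), (mul_comm A a c). now apply mul_mono_l.
Qed.

Theorem theorem4 (A : CompleteResLattice) (I : Type)
  (O : (I -> A) -> (I -> A))
  (HO : interior_operator O)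
  (Hd : forall (d : A) (x : I -> A),
      le_fun (mul_fun (const I d) (O x)) (O (mul_fun (const I d) x))) :
  exists (J : Type) (R : I -> J -> A),
    forall x : I -> A, O x = rho R (phi R x).
Proof.
  destruct HO as [Hm [Hc Hi]].
  exists (I -> A), (fun i a => O a i).
  intro x. apply functional_extensionality. intro i.
  unfold rho, phi, bigsup, biginf.
  apply le_antisym.
  - apply le_trans with (mul (O x i) (one A)).
    + rewrite mul_one. apply le_refl.
    + apply le_trans with (mul (O x i) (inf (fun a => exists t, a = res (O x t) (x t)))).
      * apply mul_mono_r. apply inf_greatest. intros y [t ->].
        apply residuation. rewrite mul_comm, mul_one. apply Hc.
      * apply sup_ub. exists x. reflexivity.
  - apply sup_least. intros y [a ->].
    set (d := inf (fun b => exists t, b = res (O a t) (x t))).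
    rewrite mul_comm.
    pose proof (Hd d (O a) i) as H1. unfold mul_fun, const in H1.
    rewrite Hi in H1.
    eapply le_trans; [exact H1|].
    apply Hm. intro k. apply residuation. apply inf_lb. exists k. reflexivity.
Qed.
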